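(* Let $V\in\mathbb{R}^{\ell\times m}$ have rows $v_1,\dots,v_\ell\in\mathbb{R}^m$ and columns $v_{*1},\dots,v_{*m}\in\mathbb{R}^\ell$. Suppose $\|v_i\|_2=1$ for all $i\in[\ell]$, and let $\theta\ge 0$ satisfy $\theta\|v_{*j}\|_1\le 1/3$ for all $j\in[m]$. Then for every $\mu=(\mu_1,\dots,\mu_\ell)\in\mathbb{R}^\ell$ there exists $y\in\mathbb{R}^m$ with $\|y\|_\infty\le 1/3$ and \[|\langle v_i,y\rangle-\mu_i|\ge\theta\quad\text{for all } i\in[\ell].\] *)

(* Defs.v *)
From mathcomp Require Import all_boot all_order all_algebra.
From mathcomp Require Import reals.
Set Implicit Arguments. Unset Strict Implicit. Unset Printing Implicit Defensive.
Import Order.TTheory GRing.Theory Num.Theory.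
Local Open Scope ring_scope.

Definition row_norm2 (R : realType) l m (V : 'M[R]_(l, m)) (i : 'I_l) : R :=
  Num.sqrt (\sum_(j < m) V i j ^+ 2).

Definition col_norm1 (R : realType) l m (V : 'M[R]_(l, m)) (j : 'I_m) : R :=
  \sum_(i < l) `|V i j|.

Definition sup_norm (R : realType) m (y : 'I_m -> R) : R :=
  \big[Num.max/0]_(j < m) `|y j|.

Definition row_dot (R : realType) l m (V : 'M[R]_(l, m)) (i : 'I_l) (y : 'I_m -> R) : R :=
  \sum_(j < m) V i j * y j.

(* Main.v *)
Require Import Defs.
From mathcomp Require Import all_boot all_order all_algebra.
From mathcomp Require Import reals.
From mathcomp Require Import ring lra.
Import Order.TTheory GRing.Theory Num.Theory.
Local Open Scope ring_scope.

Theorem mainTheorem4 (R : realType) (l m : nat) (V : 'M[R]_(l, m)) (theta : R) :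
  (forall i : 'I_l, row_norm2 V i = 1) ->
  0 <= theta ->
  (forall j : 'I_m, theta * col_norm1 V j <= 1 / 3) ->
  forall mu : 'I_l -> R,
  exists y : 'I_m -> R,
    sup_norm y <= 1 / 3 /\
    (forall i : 'I_l, theta <= `|row_dot V i y - mu i|).
Proof.
move=> Hn Ht Hc mu.
pose s (e : {ffun 'I_l -> bool}) i : R := (-1) ^+ e i.
have s2 : forall e i, s e i * s e i = 1.
  by move=> e i; rewrite /s; case: (e i); rewrite ?expr1 ?expr0; ring.
have sn : forall e i, `|s e i| = 1.
  by move=> e i; rewrite /s; case: (e i); rewrite ?expr1 ?expr0 ?normrN normr1.
pose y e j := theta * \sum_(i < l) s e i * V i j.
pose f e := \sum_(j < m) y e j ^+ 2 - 2 * theta * \sum_(i < l) s e i * mu i.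
have [e _ He] := @arg_maxP _ R _ [ffun=> false] xpredT f isT.
exists (y e); split.
  rewrite /sup_norm; elim/big_ind: _ => //.
  - by lra.
  - by move=> a b Ha Hb; rewrite ge_max Ha Hb.
  move=> j _; apply: le_trans (Hc j).
  rewrite /y normrM ger0_norm // ler_wpM2l //.
  apply: le_trans (ler_norm_sum _ _ _) _.
  by apply: ler_sum => i _; rewrite normrM sn mul1r.
move=> k.
pose e' : {ffun 'I_l -> bool} := [ffun i => if i == k then ~~ e i else e i].
have s'k : s e' k = - s e k.
  by rewrite /s ffunE eqxx; case: (e k); rewrite ?expr1 ?expr0 ?opprK.
have s'i : forall i, i != k -> s e' i = s e i.
  by move=> i /negbTE hi; rewrite /s ffunE hi.
have sumflip : forall F : 'I_l -> R,
    \sum_(i < l) s e' i * F i = \sum_(i < l) s e i * F i - 2 * s e k * F k.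
  move=> F; rewrite (bigD1 k) //= [in RHS](bigD1 k) //= s'k.
  rewrite (eq_bigr (fun i => s e i * F i)); last by move=> i /s'i ->.
  ring.
have ye' : forall j, y e' j = y e j - 2 * theta * s e k * V k j.
  by move=> j; rewrite /y sumflip; ring.
have Hv : \sum_(j < m) V k j ^+ 2 = 1.
  have := Hn k; rewrite /row_norm2 => h.
  rewrite -(@sqr_sqrtr _ (\sum_(j < m) V k j ^+ 2)) ?h ?expr1n //.
  by apply: sumr_ge0 => j _; apply: sqr_ge0.
have Hf := He e' isT.
have : f e' = f e - 4 * theta * s e k * (row_dot V k (y e) - mu k)
              + 4 * theta ^+ 2 * (s e k * s e k).
  rewrite /f sumflip.
  rewrite (eq_bigr (fun j => y e j ^+ 2 - 4 * theta * s e k * (V k j * y e j)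
     + 4 * theta ^+ 2 * (s e k * s e k) * V k j ^+ 2)); last first.
    by move=> j _; rewrite ye'; ring.
  rewrite big_split /= sumrB -!mulr_sumr Hv /row_dot; ring.
move=> Ef; rewrite Ef s2 in Hf.
have E : 4 * theta * s e k * (row_dot V k (y e) - mu k)
   = 4 * (theta * (s e k * (row_dot V k (y e) - mu k))) by ring.
rewrite E expr2 mulr1 in Hf.
have H1 : theta * theta <= theta * (s e k * (row_dot V k (y e) - mu k)).
  move: Hf; rewrite /Order.ge /=.
  set X := theta * _; set F := f e.
  by rewrite -subr_ge0 => H; rewrite -subr_ge0; lra.
have [->|tpos] := eqVneq theta 0; first by [].
have tp : 0 < theta by rewrite lt_def tpos Ht.
rewrite ler_pM2l // in H1.
apply: le_trans H1 _.
by apply: le_trans (ler_norm _) _; rewrite normrM sn mul1r.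
Qed.
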